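(* For all integers $n\geq 0$, $k\geq 1$ and $i\geq 0$, \begin{align*} \bar a_{2^ki+\frac{2^k-6}{2}}(8n+7)&\equiv 0 \pmod{2^{k+3}},\\ \bar a_{2^ki+\frac{2^k-2}{2}}(8n+7)&\equiv 0 \pmod{2^{k+3}}. \end{align*}
   Context: For an integer $k\geq 1$ let $f_k:=\prod_{n\geq 1}(1-q^{kn})$. For an integer $c$, $\bar a_c(n)$ denotes the coefficient of $q^n$ in the power series $\dfrac{f_4^{c-1}}{f_1^2f_2^{2c-3}}$, i.e. $\sum_{n\geq 0}\bar a_c(n)q^n=\dfrac{f_4^{c-1}}{f_1^2f_2^{2c-3}}$ (for $c\geq1$ these are the generalized overcubic partition numbers). *)

(* Defs.v *)
From mathcomp Require Import all_boot all_order all_algebra.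
Set Implicit Arguments. Unset Strict Implicit. Unset Printing Implicit Defensive.
Import Order.TTheory GRing.Theory Num.Theory.
Local Open Scope ring_scope.

(* For k >= 1, f_k = prod_{m>=1} (1 - q^{k m}).  Modulo q^{N+1} we have
     f_k      == prod_{m=1}^{N} (1 - q^{k m}),
     f_k^{-1} == prod_{m=1}^{N} sum_{t=0}^{N} q^{k m t}.
   [eta_trunc k e N] is a polynomial congruent to f_k^e modulo q^{N+1},
   for any integer exponent e (Negz m = -(m+1)). *)
Definition eta_trunc (k : nat) (e : int) (N : nat) : {poly int} :=
  match e with
  | Posz m => (\prod_(1 <= j < N.+1) (1 - 'X^(k * j))) ^+ m
  | Negz m => (\prod_(1 <= j < N.+1) \sum_(0 <= t < N.+1) 'X^(k * j * t)) ^+ m.+1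
  end.

Definition abar (c : int) (n : nat) : int :=
  (eta_trunc 4 (c - 1) n * eta_trunc 1 (-2) n * eta_trunc 2 (- (2 * c - 3)) n)`_n.

(* Main.v *)
Require Import Defs.
From mathcomp Require Import all_boot all_order all_algebra.
From mathcomp Require Import ring zify.
Import Order.TTheory GRing.Theory Num.Theory.
Local Open Scope ring_scope.

Definition eqt (N : nat) (p q : {poly int}) :=
  exists D : {poly int}, p - q = 'X^(N.+1) * D.

Lemma eqt_refl N p : eqt N p p.
Proof. by exists 0; rewrite subrr mulr0. Qed.
Lemma eqt_sym N p q : eqt N p q -> eqt N q p.
Proof. by case=> D h; exists (-D); rewrite mulrN -h; ring. Qed.
Lemma eqt_trans N p q r : eqt N p q -> eqt N q r -> eqt N p r.
Proof. by case=> D1 h1 [D2 h2]; exists (D1 + D2); rewrite mulrDr -h1 -h2; ring. Qed.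
Lemma eqtD N p q p' q' : eqt N p p' -> eqt N q q' -> eqt N (p + q) (p' + q').
Proof. by case=> D1 h1 [D2 h2]; exists (D1 + D2); rewrite mulrDr -h1 -h2; ring. Qed.
Lemma eqtN N p p' : eqt N p p' -> eqt N (- p) (- p').
Proof. by case=> D1 h1; exists (- D1); rewrite mulrN -h1; ring. Qed.
Lemma eqtB N p q p' q' : eqt N p p' -> eqt N q q' -> eqt N (p - q) (p' - q').
Proof. by move=> h1 h2; apply: eqtD => //; apply: eqtN. Qed.
Lemma eqtM N p q p' q' : eqt N p p' -> eqt N q q' -> eqt N (p * q) (p' * q').
Proof.
by case=> D1 h1 [D2 h2]; exists (D1 * q + p' * D2);
  rewrite mulrDr mulrA -h1 mulrCA -h2; ring.
Qed.
Lemma eqtMl N p q q' : eqt N q q' -> eqt N (p * q) (p * q').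
Proof. by move=> h; apply: eqtM => //; apply: eqt_refl. Qed.
Lemma eqtMr N p p' q : eqt N p p' -> eqt N (p * q) (p' * q).
Proof. by move=> h; apply: eqtM => //; apply: eqt_refl. Qed.
Lemma eqtX N p p' n : eqt N p p' -> eqt N (p ^+ n) (p' ^+ n).
Proof.
move=> h; elim: n => [|n IH]; first by rewrite !expr0; apply: eqt_refl.
by rewrite !exprS; apply: eqtM.
Qed.
Lemma eqt_le N M p q : (N <= M)%N -> eqt M p q -> eqt N p q.
Proof.
move=> le [D h]; exists ('X^(M - N) * D); rewrite h mulrA -exprD.
by congr (_ * _); congr ('X^_); lia.
Qed.
Lemma eqt_X0 N a p : (N < a)%N -> eqt N ('X^a * p) 0.
Proof.
move=> lt; exists ('X^(a - N.+1) * p); rewrite subr0 mulrA -exprD.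
by congr (_ * _); congr ('X^_); lia.
Qed.
Lemma eqt_eq N p q : p = q -> eqt N p q.
Proof. by move=> ->; apply: eqt_refl. Qed.

Lemma eqt_prod N (I : Type) (r : seq I) (P : pred I) (F G : I -> {poly int}) :
  (forall i, P i -> eqt N (F i) (G i)) ->
  eqt N (\prod_(i <- r | P i) F i) (\prod_(i <- r | P i) G i).
Proof.
move=> h; apply: (big_ind2 (eqt N)); first exact: eqt_refl.
  by move=> *; apply: eqtM.
exact: h.
Qed.
Lemma eqt_sum N (I : Type) (r : seq I) (P : pred I) (F G : I -> {poly int}) :
  (forall i, P i -> eqt N (F i) (G i)) ->
  eqt N (\sum_(i <- r | P i) F i) (\sum_(i <- r | P i) G i).
Proof.
move=> h; apply: (big_ind2 (eqt N)); first exact: eqt_refl.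
  by move=> *; apply: eqtD.
exact: h.
Qed.

Definition cong (a N : nat) (p q : {poly int}) :=
  exists C D : {poly int}, p - q = (2 ^+ a : int)%:P * C + 'X^(N.+1) * D.

Lemma cong_refl a N p : cong a N p p.
Proof. by exists 0, 0; rewrite subrr !mulr0 addr0. Qed.
Lemma eqt_cong a N p q : eqt N p q -> cong a N p q.
Proof. by case=> D h; exists 0, D; rewrite mulr0 add0r. Qed.
Lemma cong_sym a N p q : cong a N p q -> cong a N q p.
Proof. by case=> C [D h]; exists (-C), (-D); rewrite !mulrN -opprD -h; ring. Qed.
Lemma cong_trans a N p q r : cong a N p q -> cong a N q r -> cong a N p r.
Proof.
case=> C1 [D1 h1] [C2 [D2 h2]]; exists (C1 + C2), (D1 + D2).
have -> : p - r = (p - q) + (q - r) by ring.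
 rewrite h1 h2; ring.
Qed.

Lemma XX (a b c d : nat) : (a + b = c + d)%N -> ('X^a * 'X^b : {poly int}) = 'X^c * 'X^d.
Proof. by move=> h; rewrite -!exprD h. Qed.

Definition P (t : nat) : {poly int} := \prod_(1 <= j < t.+1) (1 - 'X^(2 * j)).

Lemma P0 : P 0 = 1. Proof. by rewrite /P big_geq. Qed.
Lemma PS t : P t.+1 = P t * (1 - 'X^(2 * t.+1)).
Proof. by rewrite /P big_nat_recr. Qed.

Fixpoint qb (n m : nat) : {poly int} :=
  match n, m with
  | 0, 0 => 1
  | 0, _.+1 => 0
  | _.+1, 0 => 1
  | n'.+1, m'.+1 => qb n' m' + 'X^(2 * m'.+1) * qb n' m'.+1
  end.

Lemma qb_n0 n : qb n 0 = 1. Proof. by case: n. Qed.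
Lemma qbS n m : qb n.+1 m.+1 = qb n m + 'X^(2 * m.+1) * qb n m.+1.
Proof. by []. Qed.
Lemma qb_gt n m : (n < m)%N -> qb n m = 0.
Proof.
elim: n m => [|n IH] [|m] //= lt.
by rewrite !IH ?mulr0 ?addr0 //; lia.
Qed.

Lemma qb_nn n : qb n n = 1.
Proof. by elim: n => [|n IH] //=; rewrite IH qb_gt ?mulr0 ?addr0. Qed.

Lemma qb_pascal2 n m : qb n.+1 m.+1 = 'X^(2 * (n - m)) * qb n m + qb n m.+1.
Proof.
elim: n m => [|n IH] m.
  by case: m => [|m] /=; rewrite ?sub0n ?mul0n ?expr0 ?mul1r ?mulr0 ?addr0.
case: m => [|m].
  rewrite [LHS]qbS [in LHS]IH [in RHS]qbS !qb_n0 subn0.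
  rewrite mulrDr mulrA -exprD.
  have -> : (2 * 1 + 2 * n = 2 * n.+1)%N by lia.
  ring.
rewrite [LHS]qbS {1}(IH m) {1}(IH m.+1) !qbS subSS.
have [le|gt] := leqP m.+1 n.
  rewrite !mulrDr !mulrA -!exprD.
  have -> : (2 * m.+2 + 2 * (n - m.+1) = 2 * (n - m) + 2 * m.+1)%N by lia.
  ring.
rewrite (qb_gt n m.+1) // (qb_gt n m.+2); last by lia.
ring.
Qed.

Lemma qb_prod n m : (m <= n)%N -> qb n m * P m * P (n - m) = P n.
Proof.
elim: n m => [|n IH] m.
  by rewrite leqn0 => /eqP ->; rewrite /= P0 !mulr1.
case: m => [|m] le.
  by rewrite qb_n0 P0 subn0 !mul1r.
rewrite qbS subSS.
have [le2|gt] := leqP m.+1 n.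
  have e : (n - m = (n - m.+1).+1)%N by lia.
  have h1 := IH m (ltnW le2); have h2 := IH m.+1 le2.
  have -> : (qb n m + 'X^(2 * m.+1) * qb n m.+1) * P m.+1 * P (n - m)
    = (qb n m * P m * P (n - m)) * (1 - 'X^(2 * m.+1))
      + 'X^(2 * m.+1) * (qb n m.+1 * P m.+1 * P (n - m.+1)) * (1 - 'X^(2 * (n - m.+1).+1)).
    by rewrite (PS m) e (PS (n - m.+1)); ring.
  rewrite h1 h2 PS.
  have -> : ('X^(2 * n.+1) : {poly int}) = 'X^(2 * m.+1) * 'X^(2 * (n - m.+1).+1).
    by rewrite -exprD; congr ('X^_); lia.
  ring.
have em : m = n by lia.
subst m; rewrite subnn (qb_gt n n.+1) // mulr0 addr0 P0 mulr1 PS.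
by rewrite qb_nn mul1r.
Qed.

Lemma qb_rec2 N M : qb N.+2 M.+2 = 'X^(2 * (N - M)) * qb N M
  + (1 + 'X^(2 * M.+2 + 2 * (N - M.+1))) * qb N M.+1 + 'X^(2 * M.+2) * qb N M.+2.
Proof. rewrite qbS !qb_pascal2 exprD; ring. Qed.

Lemma qb_rec1 N : qb N.+2 1 = 1 + 'X^(2 * N.+1) + 'X^2 * qb N 1.
Proof.
rewrite qbS qb_n0 qb_pascal2 qb_n0 subn0 mulr1.
have -> : ('X^(2 * N.+1) : {poly int}) = 'X^(2 * 1) * 'X^(2 * N) by rewrite -exprD; congr ('X^_); lia.
ring.
Qed.

Definition sq (n a : nat) : nat := ((a - n) ^ 2 + (n - a) ^ 2)%N.
Definition c (n a : nat) : {poly int} := 'X^(sq n a) * qb (2 * n) a.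

Lemma c_gt n a : (2 * n < a)%N -> c n a = 0.
Proof. by move=> h; rewrite /c qb_gt ?mulr0. Qed.

Definition d1 n a := if a is a'.+1 then c n a' else 0.
Definition d2 n a := if a is a'.+2 then c n a' else 0.

Lemma c_rec n a : c n.+1 a = 'X^((2 * n).+1) * c n a
   + (1 + 'X^((4 * n).+2)) * d1 n a + 'X^((2 * n).+1) * d2 n a.
Proof.
case: a => [|[|M]].
  rewrite /c /d1 /d2 !qb_n0 !mulr1 !mulr0 !addr0 -exprD /sq.
  congr ('X^_); lia.
  rewrite /d1 /d2 /c mulr0 addr0 qb_n0 mulr1.
  have -> : (2 * n.+1 = (2 * n).+2)%N by lia.
  rewrite qb_rec1 !mulrA -!exprD.
  have -> : (sq n.+1 1 = sq n 0)%N by rewrite /sq; lia.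
  have -> : ((2 * n).+1 + sq n 1 = sq n 0 + 2)%N.
    rewrite /sq; case: n => [|n] //=; nia.
  have -> : ('X^(2 * (2 * n).+1) : {poly int}) = 'X^((4 * n).+2) by congr ('X^_); lia.
  rewrite exprD; ring.
- rewrite /d1 /d2 /c.
  have -> : (2 * n.+1 = (2 * n).+2)%N by lia.
  rewrite qb_rec2.
  have [le|gt] := leqP M.+1 (2 * n).
  + have -> : ('X^(2 * M.+2 + 2 * (2 * n - M.+1)) : {poly int}) = 'X^((4 * n).+2).
      by congr ('X^_); lia.
    have h1 : ('X^((2 * n).+1) * 'X^(sq n M.+2) : {poly int}) = 'X^(sq n.+1 M.+2) * 'X^(2 * M.+2).
      by apply: XX; rewrite /sq; nia.
    have h2 : ('X^((2 * n).+1) * 'X^(sq n M) : {poly int}) = 'X^(sq n.+1 M.+2) * 'X^(2 * (2 * n - M)).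
      by apply: XX; rewrite /sq; nia.
    have h3 : sq n M.+1 = sq n.+1 M.+2 by rewrite /sq; nia.
    rewrite h3 !mulrA h1 h2; ring.
  + rewrite (qb_gt (2 * n) M.+1) // (qb_gt (2 * n) M.+2); last by lia.
    rewrite !mulr0 !addr0 add0r.
    have [eM|ltM] : M = (2 * n)%N \/ (2 * n < M)%N by lia.
      subst M; rewrite !mulrA; congr (_ * _); apply: XX; rewrite /sq; nia.
    by rewrite qb_gt // !mulr0.
Qed.

Definition O (e : int) (n : nat) : {poly int} :=
  \prod_(1 <= j < n.+1) (1 + e%:P * 'X^((2 * j).-1)).
Definition S (e : int) (n : nat) : {poly int} :=
  \sum_(0 <= a < (2 * n).+1) (e ^+ (a + n))%:P * c n a.

Lemma S_ext e n K : (2 * n < K)%N ->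
  \sum_(0 <= a < K) (e ^+ (a + n))%:P * c n a = S e n.
Proof.
move=> h; rewrite /S (@big_cat_nat _ _ _ (2 * n).+1) //=.
rewrite [X in _ + X]big1_seq ?addr0 //.
by move=> a /andP[_]; rewrite mem_index_iota => /andP[h1 _]; rewrite c_gt ?mulr0.
Qed.

Lemma S_rec e n : e ^+ 2 = 1 -> S e n.+1 = (1 + e%:P * 'X^((2 * n).+1)) ^+ 2 * S e n.
Proof.
move=> he.
have hK : ((2 * n.+1).+1 = (2 * n).+3)%N by lia.
rewrite {1}/S hK.
under eq_bigr => a _ do rewrite c_rec !mulrDr.
rewrite !big_split /=.
have L1 : \sum_(0 <= i < (2 * n).+3) (e ^+ (i + n.+1))%:P * ('X^((2 * n).+1) * c n i)
    = e%:P * 'X^((2 * n).+1) * S e n.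
  rewrite -(S_ext e n (2 * n).+3); last by lia.
  rewrite mulr_sumr; apply: eq_bigr => a _.
  by rewrite addnS exprS rmorphM /=; ring.
have L2 : \sum_(0 <= i < (2 * n).+3) (e ^+ (i + n.+1))%:P * ((1 + 'X^((4 * n).+2)) * d1 n i)
    = (1 + 'X^((4 * n).+2)) * S e n.
  rewrite big_nat_recl //= /d1 !mulr0 add0r.
  rewrite -(S_ext e n (2 * n).+2); last by lia.
  rewrite mulr_sumr; apply: eq_bigr => a _.
  have -> : (e ^+ (a.+1 + n.+1) = e ^+ (a + n))%R.
    by rewrite -[in RHS](mul1r (e ^+ (a + n))) -he -exprD; congr (_ ^+ _); lia.
  ring.
have L3 : \sum_(0 <= i < (2 * n).+3) (e ^+ (i + n.+1))%:P * ('X^((2 * n).+1) * d2 n i)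
    = e%:P * 'X^((2 * n).+1) * S e n.
  rewrite big_nat_recl //= /d2 !mulr0 add0r big_nat_recl //= !mulr0 add0r.
  rewrite -(S_ext e n (2 * n).+1); last by lia.
  rewrite mulr_sumr; apply: eq_bigr => a _.
  have -> : (e ^+ (a.+2 + n.+1) = e * e ^+ (a + n))%R.
    by rewrite -[in RHS](mul1r (e ^+ (a + n))) -he -exprD -exprS; congr (_ ^+ _); lia.
  rewrite rmorphM /=; ring.
rewrite L1 L2 L3.
have -> : ('X^((4 * n).+2) : {poly int}) = 'X^((2 * n).+1) * 'X^((2 * n).+1).
  by rewrite -exprD; congr ('X^_); lia.
have he' : (e%:P * e%:P : {poly int}) = 1 by rewrite -rmorphM /= -expr2 he.
rewrite expr2 !mulrDr !mulrDl !mul1r !mulr1.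
have -> : e%:P * 'X^((2 * n).+1) * (e%:P * 'X^((2 * n).+1)) = ('X^((2 * n).+1) * 'X^((2 * n).+1) : {poly int}).
  by rewrite mulrACA he' mul1r.
ring.
Qed.

Lemma O_S e n : e ^+ 2 = 1 -> O e n ^+ 2 = S e n.
Proof.
move=> he; elim: n => [|n IH].
  by rewrite /O /S big_geq // expr1n big_nat1 /c /sq /= expr0 mulr1 mul1r.
rewrite S_rec // -IH /O big_nat_recr // /=.
have -> : ((n + 1 * n.+1)%coq_nat = (2 * n).+1)%N by lia.
ring.
Qed.

Definition F (k N : nat) : {poly int} := \prod_(1 <= j < N.+1) (1 - 'X^(k * j)).
Definition th (e : int) (R : nat) : {poly int} :=
  1 + \sum_(1 <= r < R.+1) (2 * e ^+ r)%:P * 'X^(r ^ 2).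

Lemma FS k t : F k t.+1 = F k t * (1 - 'X^(k * t.+1)).
Proof. by rewrite /F big_nat_recr. Qed.

Lemma F_trunc k N t : (0 < k)%N -> (N <= t)%N -> eqt N (F k t) (F k N).
Proof.
move=> k0; elim: t => [|t IH] le.
  have -> : N = 0%N by lia.
  exact: eqt_refl.
have [eN|lt] := eqVneq N t.+1; first by rewrite eN; apply: eqt_refl.
have le' : (N <= t)%N by lia.
apply: eqt_trans (IH le'); rewrite FS.
apply: eqt_trans (_ : eqt N (F k t * 1) _); last by rewrite mulr1; apply: eqt_refl.
apply: eqtMl; apply: eqt_sym.
exists 'X^(k * t.+1 - N.+1); rewrite opprB addrC subrK -exprD; congr ('X^_); nia.
Qed.

Lemma P_F t : P t = F 2 t. Proof. by []. Qed.

Lemma S_th e n : e ^+ 2 = 1 ->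
  \sum_(0 <= a < (2 * n).+1) (e ^+ (a + n))%:P * 'X^(sq n a) = th e n.
Proof.
move=> he.
have ee k : e ^+ (2 * k) = 1 by rewrite exprM he expr1n.
have hn : (n <= (2 * n).+1)%N by lia.
rewrite (big_cat_nat (leq0n n) hn) /=.
rewrite [X in _ + X]big_ltn; last by lia.
rewrite -[n.+1 in X in _ + (_ + X)](add1n n) big_addn.
have -> : ((2 * n).+1 - n = n.+1)%N by lia.
rewrite /sq subnn /= expr0 addnn -mul2n ee polyC1 mul1r.
set g := fun i : nat => (e ^+ i)%:P * ('X^(i ^ 2) : {poly int}).
have h1 : \sum_(0 <= i < n) (e ^+ (i + n))%:P * 'X^(((i - n) ^ 2 + (n - i) ^ 2)%N)
   = \sum_(0 <= i < n) g i.+1.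
  rewrite (big_nat_rev _ _ 0%N n) /=; apply: eq_big_nat => i /andP[_ hi].
  rewrite /g.
  have -> : ((0 + n - i.+1 - n) ^ 2 + (n - (0 + n - i.+1)) ^ 2 = i.+1 ^ 2)%N.
    have -> : (0 + n - i.+1 - n = 0)%N by lia.
    by have -> : (n - (0 + n - i.+1) = i.+1)%N by lia.
  congr (_%:P * _).
  have -> : (0 + n - i.+1 + n = i.+1 + 2 * (n - i.+1))%N by lia.
  by rewrite exprD ee mulr1.
have h2 : \sum_(1 <= i < n.+1) (e ^+ (i + n + n))%:P * 'X^(((i + n - n) ^ 2 + (n - (i + n)) ^ 2)%N)
   = \sum_(0 <= i < n) g i.+1.
  rewrite big_add1 /=; apply: eq_big_nat => i /andP[_ hi].
  rewrite /g.
  have -> : ((i.+1 + n - n) ^ 2 + (n - (i.+1 + n)) ^ 2 = i.+1 ^ 2)%N.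
    have -> : (i.+1 + n - n = i.+1)%N by lia.
    have -> : (n - (i.+1 + n) = 0)%N by lia.
    by rewrite exp0n // addn0.
  congr (_%:P * _).
  by rewrite -addnA addnn -mul2n exprD ee mulr1.
rewrite h1 h2 /th big_add1 /=.
rewrite addrCA; congr (_ + _).
rewrite -mulr2n -sumrMnl; apply: eq_bigr => i _.
by rewrite /g mulr2n -mulrDl -polyCD; congr (_%:P * _); ring.
Qed.


Lemma x_le_sq x : (x <= x ^ 2)%N.
Proof. by case: x => // x; rewrite -mulnn leq_pmulr. Qed.

Lemma sq_bound n a N : (sq n a <= N)%N -> (n - N <= a)%N /\ (a <= n + N)%N.
Proof.
rewrite /sq => h.
have := x_le_sq (a - n); have := x_le_sq (n - a).
lia.
Qed.

Lemma gauss_lim e N : e ^+ 2 = 1 ->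
  eqt N (O e (2 * N).+1 ^+ 2 * P N ^+ 2) (P N * th e (2 * N).+1).
Proof.
move=> he; set n := (2 * N).+1.
rewrite O_S // -S_th // /S mulr_suml mulr_sumr.
apply: eqt_sum => a _.
have [lt|le] := ltnP N (sq n a).
  apply: eqt_trans (_ : eqt N _ 0) _.
    have -> : (e ^+ (a + n))%:P * c n a * P N ^+ 2
      = 'X^(sq n a) * ((e ^+ (a + n))%:P * qb (2 * n) a * P N ^+ 2) by rewrite /c; ring.
    exact: eqt_X0.
  apply: eqt_sym.
  have -> : P N * ((e ^+ (a + n))%:P * 'X^(sq n a))
      = 'X^(sq n a) * (P N * (e ^+ (a + n))%:P) by ring.
  exact: eqt_X0.
have [b1 b2] := sq_bound _ _ _ le.
have h1 : (N <= a)%N by rewrite /n in b1; lia.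
have h2 : (N <= 2 * n - a)%N by rewrite /n in b2 *; lia.
have h3 : (a <= 2 * n)%N by lia.
have e1 : eqt N (P N) (P a) by apply: eqt_sym; apply: F_trunc.
have e2 : eqt N (P N) (P (2 * n - a)) by apply: eqt_sym; apply: F_trunc.
have e3 : eqt N (P (2 * n)) (P N) by apply: F_trunc => //; lia.
apply: eqt_trans (_ : eqt N ((e ^+ (a + n))%:P * 'X^(sq n a) * (qb (2 * n) a * P a * P (2 * n - a))) _).
  rewrite /c expr2.
  have -> : (e ^+ (a + n))%:P * ('X^(sq n a) * qb (2 * n) a) * (P N * P N)
    = (e ^+ (a + n))%:P * 'X^(sq n a) * (qb (2 * n) a * P N * P N) by ring.
  by apply: eqtMl; apply: eqtM => //; apply: eqtMl.
rewrite qb_prod // mulrC.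
exact: eqtMr.
Qed.

Lemma OS e n : O e n.+1 = O e n * (1 + e%:P * 'X^((2 * n).+1)).
Proof.
rewrite /O big_nat_recr //=.
by have -> : ((n + 1 * n.+1)%coq_nat = (2 * n).+1)%N by lia.
Qed.

Lemma F1_split n : F 1 (2 * n) = O (-1) n * P n.
Proof.
elim: n => [|n IH]; first by rewrite /F /O /P !big_geq // mulr1.
have -> : (2 * n.+1 = (2 * n).+2)%N by lia.
rewrite !FS IH OS PS P_F polyCN polyC1 !mul1n.
have -> : ((2 * n).+2 = 2 * n.+1)%N by lia.
ring.
Qed.

Lemma OO_split n : O 1 n * O (-1) n * F 4 n = F 2 (2 * n).
Proof.
elim: n => [|n IH]; first by rewrite /F /O !big_geq // !mulr1.
have -> : (2 * n.+1 = (2 * n).+2)%N by lia.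
rewrite !FS -IH !OS polyCN polyC1.
have -> : ('X^(2 * (2 * n).+2) : {poly int}) = 'X^(4 * n.+1) by congr ('X^_); lia.
have -> : ('X^(2 * (2 * n).+1) : {poly int}) = 'X^((2 * n).+1) * 'X^((2 * n).+1)
  by rewrite -exprD; congr ('X^_); lia.
ring.
Qed.

Lemma gauss_minus N : eqt N (F 1 N ^+ 2) (F 2 N * th (-1) (2 * N).+1).
Proof.
set n := (2 * N).+1.
have e1 : eqt N (F 1 N) (O (-1) n * P N).
  apply: eqt_trans (_ : eqt N _ (F 1 (2 * n))) _.
    by apply: eqt_sym; apply: F_trunc => //; lia.
  rewrite F1_split; apply: eqtMl; apply: F_trunc => //; lia.
apply: eqt_trans (eqtX _ _ _ 2 e1) _.
rewrite exprMn -P_F; apply: gauss_lim.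
by rewrite -signr_odd /= expr0.
Qed.

Definition Fi (k N : nat) : {poly int} :=
  \prod_(1 <= j < N.+1) \sum_(0 <= t < N.+1) 'X^(k * j * t).

Lemma eqt_prod_nat N m n (F G : nat -> {poly int}) :
  (forall j, (m <= j < n)%N -> eqt N (F j) (G j)) ->
  eqt N (\prod_(m <= j < n) F j) (\prod_(m <= j < n) G j).
Proof. by move=> h; rewrite !big_nat; apply: eqt_prod. Qed.

Lemma F_Fi k N : (0 < k)%N -> eqt N (F k N * Fi k N) 1.
Proof.
move=> k0; rewrite /F /Fi -big_split /=.
apply: eqt_trans (_ : eqt N _ (\prod_(1 <= j < N.+1) 1)) _; last first.
  by rewrite big1_eq; apply: eqt_refl.
apply: eqt_prod_nat => j /andP[j1 _].
have -> : ((1 - 'X^(k * j)) * \sum_(0 <= t < N.+1) 'X^(k * j * t) : {poly int})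
    = 1 - 'X^(k * j) ^+ N.+1.
  have h := subrX1 ('X^(k * j) : {poly int}) N.+1.
  rewrite big_mkord.
  have -> : \sum_(i < N.+1) ('X^(k * j * i) : {poly int}) = \sum_(i < N.+1) 'X^(k * j) ^+ i.
    by apply: eq_bigr => i _; rewrite exprM.
  rewrite -[LHS]opprK -mulNr opprB -h; ring.
apply: eqt_sym; exists ('X^(k * j * N.+1 - N.+1)).
rewrite -exprM opprB addrC subrK -exprD; congr ('X^_); nia.
Qed.

Definition pw (A B : {poly int}) (e : int) : {poly int} :=
  match e with Posz m => A ^+ m | Negz m => B ^+ m.+1 end.

Lemma eta_pw k e N : eta_trunc k e N = pw (F k N) (Fi k N) e.
Proof. by case: e. Qed.

Lemma pw_sub N A B n m : eqt N (A * B) 1 ->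
  eqt N (pw A B (n%:Z - m%:Z)) (A ^+ n * B ^+ m).
Proof.
move=> hAB; have [le|lt] := leqP m n.
  rewrite subzn //= -(subnK le) exprD -mulrA -exprMn addnK.
  apply: eqt_sym; apply: eqt_trans (_ : eqt N (A ^+ (n - m) * 1 ^+ m) _).
    by apply: eqtMl; apply: eqtX.
  by rewrite expr1n mulr1; apply: eqt_refl.
have -> : n%:Z - m%:Z = Negz (m - n).-1 by rewrite NegzE; lia.
rewrite /= prednK; last by lia.
have -> : A ^+ n * B ^+ m = (A * B) ^+ n * B ^+ (m - n).
  by rewrite exprMn -mulrA -exprD subnKC // ltnW.
apply: eqt_sym; apply: eqt_trans (_ : eqt N (1 ^+ n * B ^+ (m - n)) _).
  by apply: eqtMr; apply: eqtX.
by rewrite expr1n mul1r; apply: eqt_refl.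
Qed.

Lemma int_rep (e : int) : exists n m : nat, e = n%:Z - m%:Z.
Proof. by case: e => [n|m]; [exists n, 0%N; rewrite subr0 | exists 0%N, m.+1; rewrite NegzE sub0r]. Qed.

Lemma pwD N A B e1 e2 : eqt N (A * B) 1 ->
  eqt N (pw A B (e1 + e2)) (pw A B e1 * pw A B e2).
Proof.
move=> h; have [n1 [m1 ->]] := int_rep e1; have [n2 [m2 ->]] := int_rep e2.
have -> : n1%:Z - m1%:Z + (n2%:Z - m2%:Z) = (n1 + n2)%N%:Z - (m1 + m2)%N%:Z by lia.
apply: eqt_trans (pw_sub _ _ _ _ _ h) _.
apply: eqt_sym; apply: eqt_trans (eqtM _ _ _ _ _ (pw_sub _ _ _ n1 m1 h) (pw_sub _ _ _ n2 m2 h)) _.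
by rewrite !exprD; apply: eqt_eq; ring.
Qed.

Lemma pw_mul A1 A2 B1 B2 e : pw (A1 * A2) (B1 * B2) e = pw A1 B1 e * pw A2 B2 e.
Proof. by case: e => m /=; rewrite exprMn. Qed.

Lemma pw_sq A B e : pw (A ^+ 2) (B ^+ 2) e = pw A B (e + e).
Proof.
case: e => m.
  have -> : m%:Z + m%:Z = (2 * m)%N%:Z by lia.
  by rewrite /= exprM.
have -> : Negz m + Negz m = Negz (2 * m).+1 by rewrite !NegzE; lia.
by rewrite /= -exprM; congr (_ ^+ _); lia.
Qed.

Lemma pw_swap A B e : pw B A e = pw A B (- e).
Proof.
case: e => [[|m]|m] //=.
Qed.

Definition th2 (e : int) (R : nat) : {poly int} :=
  1 + \sum_(1 <= r < R.+1) (2 * e ^+ r)%:P * 'X^(2 * r ^ 2).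

Lemma eqt_comp2 M p q : eqt M p q -> eqt (2 * M).+1 (p \Po 'X^2) (q \Po 'X^2).
Proof.
case=> D h; exists (D \Po 'X^2).
rewrite -rmorphB h rmorphM /= comp_Xn_poly -exprM.
by congr ('X^_ * _); lia.
Qed.

Lemma F_comp2 k N : F k N \Po 'X^2 = F (2 * k) N.
Proof.
rewrite /F rmorph_prod; apply: eq_bigr => j _.
by rewrite rmorphB rmorph1 /= comp_Xn_poly -exprM mulnA.
Qed.

Lemma th_comp2 e R : th e R \Po 'X^2 = th2 e R.
Proof.
rewrite /th /th2 rmorphD rmorph1 rmorph_sum /=; congr (_ + _).
apply: eq_bigr => r _.
by rewrite rmorphM /= comp_polyC comp_Xn_poly -exprM.
Qed.

Lemma gauss2 N : eqt N (F 2 N ^+ 2) (F 4 N * th2 (-1) (2 * N).+1).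
Proof.
have h := eqt_comp2 _ _ _ (gauss_minus N).
rewrite rmorphXn rmorphM /= !F_comp2 th_comp2 in h.
apply: eqt_le h; lia.
Qed.

Lemma F1_O N : eqt N (F 1 N) (O (-1) (2 * N).+1 * P N).
Proof.
set n := (2 * N).+1.
apply: eqt_trans (_ : eqt N _ (F 1 (2 * n))) _.
  by apply: eqt_sym; apply: F_trunc => //; lia.
rewrite F1_split; apply: eqtMl; apply: F_trunc => //; lia.
Qed.

Lemma OO_N N : eqt N (O 1 (2 * N).+1 * O (-1) (2 * N).+1 * F 4 N) (F 2 N).
Proof.
set n := (2 * N).+1.
apply: eqt_trans (_ : eqt N (O 1 n * O (-1) n * F 4 n) _).
  by apply: eqtMl; apply: eqt_sym; apply: F_trunc => //; lia.
rewrite OO_split; apply: F_trunc => //; lia.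
Qed.

Lemma FFi1 N : eqt N (F 1 N * Fi 1 N) 1. Proof. exact: F_Fi. Qed.
Lemma FFi2 N : eqt N (F 2 N * Fi 2 N) 1. Proof. exact: F_Fi. Qed.
Lemma FFi4 N : eqt N (F 4 N * Fi 4 N) 1. Proof. exact: F_Fi. Qed.

Lemma eqt_step N a b c X Y : eqt N a b -> X = a * c -> Y = b * c -> eqt N X Y.
Proof. by move=> h -> ->; apply: eqtMr. Qed.

Ltac step mid a b c h :=
  refine (eqt_trans _ _ mid _ (eqt_step _ a b c _ _ h _ _) _); [ring | ring | ].

Lemma eqt_sq N a b : eqt N a b -> eqt N (a ^+ 2) (b ^+ 2).
Proof. exact: eqtX. Qed.

Definition thp N := th 1 (2 * N).+1.
Definition t2 N := th2 (-1) (2 * N).+1.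

Lemma thp_eq N : eqt N (thp N) (Fi 4 N ^+ 2 * Fi 1 N ^+ 2 * F 2 N ^+ 5).
Proof.
set n := (2 * N).+1.
have g : eqt N (O 1 n ^+ 2 * F 2 N ^+ 2) (F 2 N * thp N) by apply: gauss_lim; rewrite expr1n.
have e1 : eqt N (F 1 N) (O (-1) n * F 2 N) by apply: F1_O.
have oo : eqt N (O 1 n * O (-1) n * F 4 N) (F 2 N) by apply: OO_N.
have u1 := eqt_sym _ _ _ (FFi1 N); have u2 := FFi2 N; have u4 := eqt_sym _ _ _ (FFi4 N).
have u2' := eqt_sym _ _ _ u2.
set O1 := O 1 n in g oo *; set Om := O (-1) n in e1 oo *.
set F1 := F 1 N in e1 u1 *; set F2 := F 2 N in g e1 oo u2 u2' *; set F4 := F 4 N in oo u4 *.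
set G1 := Fi 1 N in u1 *; set G2 := Fi 2 N in u2 u2' *; set G4 := Fi 4 N in u4 *.
set T := thp N in g *.
step (T * (F2 * G2)) (1 : {poly int}) (F2 * G2) T u2'.
step (O1 ^+ 2 * F2 ^+ 2 * G2) (F2 * T) (O1 ^+ 2 * F2 ^+ 2) G2 (eqt_sym _ _ _ g).
step (O1 ^+ 2 * F2) (F2 * G2) (1 : {poly int}) (O1 ^+ 2 * F2) u2.
step (O1 ^+ 2 * F2 * (F1 * G1) ^+ 2) ((1 : {poly int}) ^+ 2) ((F1 * G1) ^+ 2) (O1 ^+ 2 * F2) (eqt_sq _ _ _ u1).
step ((O1 * Om) ^+ 2 * F2 ^+ 3 * G1 ^+ 2) (F1 ^+ 2) ((Om * F2) ^+ 2) (O1 ^+ 2 * F2 * G1 ^+ 2) (eqt_sq _ _ _ e1).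
step ((O1 * Om) ^+ 2 * (F4 * G4) ^+ 2 * F2 ^+ 3 * G1 ^+ 2) ((1 : {poly int}) ^+ 2) ((F4 * G4) ^+ 2) ((O1 * Om) ^+ 2 * F2 ^+ 3 * G1 ^+ 2) (eqt_sq _ _ _ u4).
step (F2 ^+ 2 * G4 ^+ 2 * F2 ^+ 3 * G1 ^+ 2) ((O1 * Om * F4) ^+ 2) (F2 ^+ 2) (G4 ^+ 2 * F2 ^+ 3 * G1 ^+ 2) (eqt_sq _ _ _ oo).
by apply: eqt_eq; ring.
Qed.

Definition W N := F 4 N * Fi 2 N ^+ 2.
Definition Wi N := Fi 4 N * F 2 N ^+ 2.

Lemma t2_eq N : eqt N (t2 N) (Wi N).
Proof.
have g := eqt_sym _ _ _ (gauss2 N); have u4 := eqt_sym _ _ _ (FFi4 N).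
rewrite /Wi.
set F2 := F 2 N in g *; set F4 := F 4 N in g u4 *; set G4 := Fi 4 N in u4 *.
set T := th2 (-1) (2 * N).+1 in g *; rewrite /t2 -/T.
step (T * (F4 * G4)) (1 : {poly int}) (F4 * G4) T u4.
step (F2 ^+ 2 * G4) (F4 * T) (F2 ^+ 2) G4 g.
by apply: eqt_eq; ring.
Qed.

Lemma W_Wi N : eqt N (W N * Wi N) 1.
Proof.
rewrite /W /Wi.
have u2 := FFi2 N; have u4 := FFi4 N.
set F2 := F 2 N in u2 *; set F4 := F 4 N in u4 *; set G2 := Fi 2 N in u2 *; set G4 := Fi 4 N in u4 *.
step ((F2 * G2) ^+ 2) (F4 * G4) (1 : {poly int}) ((F2 * G2) ^+ 2) u4.
step ((1 : {poly int}) ^+ 2) ((F2 * G2) ^+ 2) ((1 : {poly int}) ^+ 2) (1 : {poly int}) (eqt_sq _ _ _ u2).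
by apply: eqt_eq; ring.
Qed.

Lemma T_form N (c : int) :
  eqt N (eta_trunc 4 (c - 1) N * eta_trunc 1 (-2) N * eta_trunc 2 (- (2 * c - 3)) N)
        (thp N * pw (W N) (Wi N) (c + 1)).
Proof.
rewrite !eta_pw /W /Wi pw_mul pw_sq (pw_swap (F 2 N) (Fi 2 N)).
have h4 : eqt N (pw (F 4 N) (Fi 4 N) (c - 1)) (pw (F 4 N) (Fi 4 N) (c + 1) * pw (F 4 N) (Fi 4 N) (-2)).
  have -> : c - 1 = (c + 1) + (-2) by ring.
  by apply: pwD; apply: FFi4.
have h2 : eqt N (pw (F 2 N) (Fi 2 N) (- (2 * c - 3))) (pw (F 2 N) (Fi 2 N) (- (c + 1 + (c + 1))) * pw (F 2 N) (Fi 2 N) 5).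
  have -> : - (2 * c - 3) = - (c + 1 + (c + 1)) + 5 by ring.
  by apply: pwD; apply: FFi2.
have ht := eqt_sym _ _ _ (thp_eq N).
set p4 := pw (F 4 N) (Fi 4 N) (c + 1) in h4 *.
set q2 := pw (F 2 N) (Fi 2 N) (- (c + 1 + (c + 1))) in h2 *.
have e42 : pw (F 4 N) (Fi 4 N) (-2) = Fi 4 N ^+ 2 by [].
have e25 : pw (F 2 N) (Fi 2 N) 5 = F 2 N ^+ 5 by [].
have e12 : pw (F 1 N) (Fi 1 N) (-2) = Fi 1 N ^+ 2 by [].
rewrite e42 in h4; rewrite e25 in h2; rewrite e12.
set A := pw (F 4 N) (Fi 4 N) (c - 1) in h4 *.
set B := pw (F 2 N) (Fi 2 N) (- (2 * c - 3)) in h2 *.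
step (p4 * Fi 4 N ^+ 2 * Fi 1 N ^+ 2 * B) A (p4 * Fi 4 N ^+ 2) (Fi 1 N ^+ 2 * B) h4.
step (p4 * Fi 4 N ^+ 2 * Fi 1 N ^+ 2 * q2 * F 2 N ^+ 5) B (q2 * F 2 N ^+ 5) (p4 * Fi 4 N ^+ 2 * Fi 1 N ^+ 2) h2.
step (p4 * q2 * thp N) (Fi 4 N ^+ 2 * Fi 1 N ^+ 2 * F 2 N ^+ 5) (thp N) (p4 * q2) ht.
by apply: eqt_eq; ring.
Qed.

Definition k2 (a : nat) : {poly int} := ((2 : int) ^+ a)%:P.

Lemma k2D a b : k2 (a + b) = k2 a * k2 b.
Proof. by rewrite /k2 exprD polyCM. Qed.
Lemma k2_0 : k2 0 = 1. Proof. by rewrite /k2 expr0. Qed.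

Definition supp8 (r : nat) (p : {poly int}) := forall i, p`_i != 0 -> (i %% 8)%N = r.

Definition cls (r a : nat) (p : {poly int}) := exists C, supp8 r C /\ p = k2 a * C.

Lemma supp8M r s A B : supp8 r A -> supp8 s B -> supp8 ((r + s) %% 8)%N (A * B).
Proof.
move=> hA hB i; rewrite coefM => hne.
case: (boolP [exists j : 'I_i.+1, A`_j * B`_(i - j) != 0]); last first.
  move=> hn; exfalso; move/eqP: hne; apply; apply: big1 => j _.
  by move: hn; rewrite negb_exists => /forallP /(_ j); rewrite negbK => /eqP.
case/existsP => j hj.
have hAj : A`_j != 0 by apply: contraNneq hj => ->; rewrite mul0r.
have hBj : B`_(i - j) != 0 by apply: contraNneq hj => ->; rewrite mulr0.
have lj : (j <= i)%N by rewrite -ltnS ltn_ord.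
by rewrite -(hA _ hAj) -(hB _ hBj) modnDm subnKC.
Qed.

Lemma supp8_0 r : supp8 r 0.
Proof. by move=> i; rewrite coef0 eqxx. Qed.

Lemma supp8D r A B : supp8 r A -> supp8 r B -> supp8 r (A + B).
Proof.
move=> hA hB i; rewrite coefD => h.
have [hAi|hAi] := eqVneq A`_i 0; last exact: hA.
by apply: hB; rewrite hAi add0r in h.
Qed.

Lemma supp8N r A : supp8 r A -> supp8 r (- A).
Proof. by move=> hA i; rewrite coefN oppr_eq0; apply: hA. Qed.

Lemma supp8_CX r c m : (m %% 8)%N = r -> supp8 r (c%:P * 'X^m).
Proof.
move=> hm i; rewrite coefCM coefXn.
by case: (eqVneq i m) => [-> //|_]; rewrite mulr0 eqxx.
Qed.

Lemma supp8_1 : supp8 0 1.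
Proof. by move=> i; rewrite coef1; case: i. Qed.

Lemma supp8_sum r (I : Type) (s : seq I) (Pr : pred I) (G : I -> {poly int}) :
  (forall i, Pr i -> supp8 r (G i)) -> supp8 r (\sum_(i <- s | Pr i) G i).
Proof.
move=> h; apply: (big_ind (supp8 r)); [exact: supp8_0 | exact: supp8D | exact: h].
Qed.

Lemma cls0 r a : cls r a 0.
Proof. by exists 0; split; [exact: supp8_0 | rewrite mulr0]. Qed.

Lemma clsD r a P Q : cls r a P -> cls r a Q -> cls r a (P + Q).
Proof.
case=> C [hC ->] [D [hD ->]]; exists (C + D); split; first exact: supp8D.
by rewrite mulrDr.
Qed.

Lemma cls_sum r a (I : Type) (s : seq I) (Pr : pred I) (G : I -> {poly int}) :
  (forall i, Pr i -> cls r a (G i)) -> cls r a (\sum_(i <- s | Pr i) G i).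
Proof.
move=> h; apply: (big_ind (cls r a)); [exact: cls0 | exact: clsD | exact: h].
Qed.

Lemma cls_weak r a b P : (b <= a)%N -> cls r a P -> cls r b P.
Proof.
move=> le [C [hC ->]]; exists (k2 (a - b) * C); split.
  by move=> i; rewrite /k2 coefCM mulf_eq0 negb_or => /andP[_ /hC].
by rewrite mulrA -k2D subnKC.
Qed.

Lemma clsM r s a b P Q : cls r a P -> cls s b Q -> cls ((r + s) %% 8)%N (a + b) (P * Q).
Proof.
case=> C [hC ->] [D [hD ->]]; exists (C * D); split; first exact: supp8M.
by rewrite k2D; ring.
Qed.

Lemma clsMw r s t a b c P Q : cls r a P -> cls s b Q ->
  ((r + s) %% 8)%N = t -> (c <= a + b)%N -> cls t c (P * Q).
Proof. by move=> h1 h2 <- le; apply: cls_weak le _; apply: clsM. Qed.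

Lemma cls_coef0 r a P i : cls r a P -> (i %% 8)%N != r -> P`_i = 0.
Proof.
case=> C [hC ->] hi; rewrite /k2 coefCM.
have [->|hCi] := eqVneq C`_i 0; first by rewrite mulr0.
by move: hi; rewrite (hC _ hCi) eqxx.
Qed.

Lemma cls_dvd r a P i : cls r a P -> ((2 : int) ^+ a %| P`_i)%Z.
Proof. by case=> C [hC ->]; rewrite /k2 coefCM dvdz_mulr. Qed.

Definition good (a1 a2 a3 : nat) (Y : {poly int}) :=
  exists Y0 Y1 Y2 Y3, [/\ cls 0 0 Y0, cls 2 a1 Y1, cls 4 a2 Y2, cls 6 a3 Y3
                        & Y = Y0 + Y1 + Y2 + Y3].

Lemma good1 a1 a2 a3 : good a1 a2 a3 1.
Proof.
exists 1, 0, 0, 0; split; try exact: cls0; last by rewrite !addr0.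
by exists 1; split; [exact: supp8_1 | rewrite k2_0 mulr1].
Qed.

Lemma good_weak a1 a2 a3 b1 b2 b3 Y : (b1 <= a1)%N -> (b2 <= a2)%N -> (b3 <= a3)%N ->
  good a1 a2 a3 Y -> good b1 b2 b3 Y.
Proof.
move=> l1 l2 l3 [Y0 [Y1 [Y2 [Y3 [h0 h1 h2 h3 ->]]]]].
by exists Y0, Y1, Y2, Y3; split => //; apply: cls_weak; eassumption.
Qed.

Lemma good_mul a1 a2 a3 b1 b2 b3 c1 c2 c3 Y Z : good a1 a2 a3 Y -> good b1 b2 b3 Z ->
  (c1 <= b1)%N -> (c1 <= a1)%N -> (c1 <= a2 + b3)%N -> (c1 <= a3 + b2)%N ->
  (c2 <= b2)%N -> (c2 <= a2)%N -> (c2 <= a1 + b1)%N -> (c2 <= a3 + b3)%N ->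
  (c3 <= b3)%N -> (c3 <= a3)%N -> (c3 <= a1 + b2)%N -> (c3 <= a2 + b1)%N ->
  good c1 c2 c3 (Y * Z).
Proof.
move=> [Y0 [Y1 [Y2 [Y3 [h0 h1 h2 h3 ->]]]]] [Z0 [Z1 [Z2 [Z3 [g0 g1 g2 g3 ->]]]]].
move=> *.
exists (Y0 * Z0 + Y1 * Z3 + Y3 * Z1 + Y2 * Z2),
       (Y0 * Z1 + Y1 * Z0 + Y2 * Z3 + Y3 * Z2),
       (Y0 * Z2 + Y2 * Z0 + Y1 * Z1 + Y3 * Z3),
       (Y0 * Z3 + Y3 * Z0 + Y1 * Z2 + Y2 * Z1); split; last by ring.
- by repeat apply: clsD; apply: clsMw; eauto.
- by repeat apply: clsD; apply: clsMw; eauto; rewrite ?add0n ?addn0.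
- by repeat apply: clsD; apply: clsMw; eauto; rewrite ?add0n ?addn0.
- by repeat apply: clsD; apply: clsMw; eauto; rewrite ?add0n ?addn0.
Qed.

Lemma k2_1 : k2 1 = 2.
Proof. by rewrite /k2 expr1 rmorphD /= polyC1. Qed.

Lemma cls_k2 a : cls 0 a (k2 a).
Proof. by exists 1; split; [exact: supp8_1 | rewrite mulr1]. Qed.

Lemma good_sq j Y : (1 <= j)%N -> good j.+1 j.+1 j.+3 Y -> good j.+2 j.+2 j.+4 (Y ^+ 2).
Proof.
move=> j1 [Y0 [Y1 [Y2 [Y3 [h0 h1 h2 h3 ->]]]]].
have t := cls_k2 1.
exists (Y0 * Y0 + Y2 * Y2 + k2 1 * (Y1 * Y3)),
       (k2 1 * (Y0 * Y1) + k2 1 * (Y2 * Y3)),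
       (Y1 * Y1 + Y3 * Y3 + k2 1 * (Y0 * Y2)),
       (k2 1 * (Y0 * Y3) + k2 1 * (Y1 * Y2)); split; last by rewrite k2_1; ring.
- apply: clsD; [apply: clsD|].
  + by apply: (clsMw 0 0 0 0 0 0 _ _ h0 h0).
  + by apply: (clsMw 4 4 0 j.+1 j.+1 0 _ _ h2 h2).
  + by apply: (clsMw 0 0 0 1 (j.+1 + j.+3) 0 _ _ t (clsMw 2 6 0 j.+1 j.+3 _ _ _ h1 h3 _ _)).
- apply: clsD.
  + apply: (clsMw 0 2 2 1 j.+1 j.+2 _ _ t (clsMw 0 2 2 0 j.+1 j.+1 _ _ h0 h1 _ _)) => //; lia.
  + apply: (clsMw 0 2 2 1 (j.+1 + j.+3) j.+2 _ _ t (clsMw 4 6 2 j.+1 j.+3 _ _ _ h2 h3 _ _)) => //; lia.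
- apply: clsD; [apply: clsD|].
  + by apply: (clsMw 2 2 4 j.+1 j.+1 j.+2 _ _ h1 h1) => //; lia.
  + by apply: (clsMw 6 6 4 j.+3 j.+3 j.+2 _ _ h3 h3) => //; lia.
  + apply: (clsMw 0 4 4 1 j.+1 j.+2 _ _ t (clsMw 0 4 4 0 j.+1 j.+1 _ _ h0 h2 _ _)) => //; lia.
- apply: clsD.
  + apply: (clsMw 0 6 6 1 j.+3 j.+4 _ _ t (clsMw 0 6 6 0 j.+3 j.+3 _ _ h0 h3 _ _)) => //; lia.
  + apply: (clsMw 0 6 6 1 (j.+1 + j.+1) j.+4 _ _ t (clsMw 2 4 6 j.+1 j.+1 _ _ _ h1 h2 _ _)) => //; lia.
Qed.

Lemma mod_odd_sq r : odd r -> ((2 * r ^ 2) %% 8)%N = 2%N.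
Proof.
move=> o; rewrite -(odd_double_half r) o /= -addnn.
set s := r./2.
have -> : (2 * (1 + (s + s)) ^ 2 = (s * s + s) * 8 + 2)%N by rewrite expnS expn1; nia.
by rewrite modnMDl.
Qed.

Lemma mod_even_sq r : ~~ odd r -> ((2 * r ^ 2) %% 8)%N = 0%N.
Proof.
move=> o; rewrite -(odd_double_half r) (negbTE o) /= -addnn add0n.
set s := r./2.
have -> : (2 * (s + s) ^ 2 = (s * s) * 8)%N by rewrite expnS expn1; nia.
by rewrite modnMl.
Qed.

Lemma th2_dec e R : exists Y0 Y1, [/\ cls 0 0 Y0, cls 2 1 Y1 & th2 e R = Y0 + Y1].
Proof.
exists (1 + \sum_(1 <= r < R.+1 | ~~ odd r) (2 * e ^+ r)%:P * 'X^(2 * r ^ 2)),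
       (\sum_(1 <= r < R.+1 | odd r) (2 * e ^+ r)%:P * 'X^(2 * r ^ 2)); split.
- apply: clsD.
    by exists 1; split; [exact: supp8_1 | rewrite k2_0 mulr1].
  apply: cls_sum => r hr; exists ((2 * e ^+ r)%:P * 'X^(2 * r ^ 2)); split.
    by apply: supp8_CX; apply: mod_even_sq.
  by rewrite k2_0 mul1r.
- apply: cls_sum => r hr; exists ((e ^+ r)%:P * 'X^(2 * r ^ 2)); split.
    by apply: supp8_CX; apply: mod_odd_sq.
  by rewrite /k2 expr1 polyCM mulrA.
- by rewrite /th2 (bigID (fun r => odd r)) /=; ring.
Qed.

Lemma t2_good N : good 1 2 3 (t2 N).
Proof.
rewrite /t2; have [Y0 [Y1 [h0 h1 ->]]] := th2_dec (-1) (2 * N).+1.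
by exists Y0, Y1, 0, 0; split; rewrite ?addr0 //; apply: cls0.
Qed.

Lemma t2sq_good N a : good 2 2 a (t2 N ^+ 2).
Proof.
rewrite /t2; have [Y0 [Y1 [h0 h1 ->]]] := th2_dec (-1) (2 * N).+1.
have t := cls_k2 1.
exists (Y0 * Y0), (k2 1 * (Y0 * Y1)), (Y1 * Y1), 0; split.
- by apply: (clsMw 0 0 0 0 0 0 _ _ h0 h0).
- by apply: (clsMw 0 2 2 1 1 2 _ _ t (clsMw 0 2 2 0 1 1 _ _ h0 h1 _ _)).
- by apply: (clsMw 2 2 4 1 1 2 _ _ h1 h1).
- exact: cls0.
- by rewrite k2_1; ring.
Qed.

Definition ev (p : {poly int}) := forall i, p`_i != 0 -> ~~ odd i.

Lemma ev_sum (I : Type) (s : seq I) (Pr : pred I) (G : I -> {poly int}) :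
  (forall i, Pr i -> ev (G i)) -> ev (\sum_(i <- s | Pr i) G i).
Proof.
move=> h; apply: (big_ind ev) => //.
- by move=> i; rewrite coef0 eqxx.
- move=> A B hA hB i; rewrite coefD => hi.
  have [hAi|hAi] := eqVneq A`_i 0; last exact: hA.
  by apply: hB; rewrite hAi add0r in hi.
Qed.

Lemma evD A B : ev A -> ev B -> ev (A + B).
Proof.
move=> hA hB i; rewrite coefD => hi.
have [hAi|hAi] := eqVneq A`_i 0; last exact: hA.
by apply: hB; rewrite hAi add0r in hi.
Qed.

Lemma ev_CX c m : ~~ odd m -> ev (c%:P * 'X^m).
Proof.
move=> hm i; rewrite coefCM coefXn.
by case: (eqVneq i m) => [-> //|_]; rewrite mulr0 eqxx.
Qed.

Lemma ev_1 : ev 1.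
Proof. by move=> i; rewrite coef1; case: i. Qed.

Lemma mod_odd_sq1 r : odd r -> ((r ^ 2) %% 8)%N = 1%N.
Proof.
move=> o; rewrite -(odd_double_half r) o /= -addnn.
set s := r./2.
have ht : (s * s.+1 = (s * s.+1)./2 * 2)%N.
  by rewrite -[LHS](odd_double_half) oddM /= andbN add0n -muln2.
have -> : ((1 + (s + s)) ^ 2 = (s * s.+1)./2 * 8 + 1)%N by rewrite expnS expn1; nia.
by rewrite modnMDl.
Qed.

Lemma th_dec R : exists Ye Yo, [/\ ev Ye, cls 1 1 Yo & th 1 R = Ye + Yo].
Proof.
exists (1 + \sum_(1 <= r < R.+1 | ~~ odd r) (2 * 1 ^+ r)%:P * 'X^(r ^ 2)),
       (\sum_(1 <= r < R.+1 | odd r) (2 * 1 ^+ r)%:P * 'X^(r ^ 2)); split.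
- apply: evD; first exact: ev_1.
  by apply: ev_sum => r hr; apply: ev_CX; rewrite oddX.
- apply: cls_sum => r hr; exists ((1 ^+ r)%:P * 'X^(r ^ 2)); split.
    by apply: supp8_CX; apply: mod_odd_sq1.
  by rewrite /k2 expr1 polyCM mulrA.
- by rewrite /th (bigID (fun r => odd r)) /=; ring.
Qed.

Lemma final_dvd a1 a2 a3 Y R N : good a1 a2 a3 Y -> (N %% 8)%N = 7%N ->
  ((2 : int) ^+ a3.+1 %| (th 1 R * Y)`_N)%Z.
Proof.
move=> [Y0 [Y1 [Y2 [Y3 [h0 h1 h2 h3 ->]]]]] hN.
have [Ye [Yo [he ho ->]]] := th_dec R.
rewrite coefM; apply: rpred_sum => j _.
have lj : (j <= N)%N by rewrite -ltnS ltn_ord.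
case: (boolP (odd j)) => oj.
- have Ye0 : Ye`_j = 0 by apply/eqP; apply/negPn/negP => /he; rewrite oj.
  rewrite coefD Ye0 add0r.
  have [hj|hj] := eqVneq (j %% 8)%N 1%N.
  + have hi : ((N - j) %% 8)%N = 6%N by lia.
    rewrite !coefD (cls_coef0 _ _ _ _ h0) ?(cls_coef0 _ _ _ _ h1) ?(cls_coef0 _ _ _ _ h2) ?hi // !add0r.
    rewrite exprS; apply: dvdz_mul; last exact: (cls_dvd _ _ _ _ h3).
    by have := cls_dvd _ _ _ j ho; rewrite expr1.
  + by rewrite (cls_coef0 _ _ _ _ ho) ?hj // mul0r; apply: dvdz0.
- have hj2 : (j %% 2 = 0)%N by rewrite modn2 (negbTE oj).
  rewrite !coefD (cls_coef0 _ _ _ _ h0) ?(cls_coef0 _ _ _ _ h1) ?(cls_coef0 _ _ _ _ h2)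
     ?(cls_coef0 _ _ _ _ h3) ?addr0 ?mulr0 ?dvdz0 //; apply/eqP; lia.
Qed.

Lemma t2pow_good0 N e : good 1 2 3 (t2 N ^+ e).
Proof.
elim: e => [|e IH]; first by rewrite expr0; apply: good1.
rewrite exprS; apply: (good_mul 1 2 3 1 2 3) => //; apply: t2_good.
Qed.

Lemma t2pow_good2 N j : (1 <= j)%N -> good j.+1 j.+1 j.+3 (t2 N ^+ (2 ^ j)).
Proof.
elim: j => [//|j IH] _.
case: j IH => [_|j IH]; first by rewrite expn1; apply: t2sq_good.
by rewrite expnS mulnC exprM; apply: good_sq => //; apply: IH.
Qed.

Lemma goodX j Y w : (1 <= j)%N -> good j.+1 j.+1 j.+3 Y -> good j.+1 j.+1 j.+3 (Y ^+ w).
Proof.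
move=> j1 hY; elim: w => [|w IH]; first by rewrite expr0; apply: good1.
rewrite exprS; apply: (good_mul j.+1 j.+1 j.+3 j.+1 j.+1 j.+3) => //; lia.
Qed.

Lemma good_final N j w :
  good 0 0 j.+3 (t2 N ^+ (2 ^ j * w)) /\ good 0 0 j.+3 (t2 N ^+ 2 * t2 N ^+ (2 ^ j * w)).
Proof.
case: j => [|j].
  split; first by apply: (good_weak 1 2 3) => //; apply: t2pow_good0.
  by rewrite -exprD; apply: (good_weak 1 2 3) => //; apply: t2pow_good0.
have hY : good j.+2 j.+2 j.+4 (t2 N ^+ (2 ^ j.+1 * w)).
  by rewrite exprM; apply: goodX => //; apply: t2pow_good2.
split; first by apply: (good_weak j.+2 j.+2 j.+4).
apply: (good_mul 2 2 j.+4 j.+2 j.+2 j.+4) => //; try lia.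
exact: t2sq_good.
Qed.

Lemma congM a N p q p' q' : cong a N p p' -> cong a N q q' -> cong a N (p * q) (p' * q').
Proof.
case=> C1 [D1 h1] [C2 [D2 h2]]; exists (C1 * q + p' * C2), (D1 * q + p' * D2).
have -> : p * q - p' * q' = (p - p') * q + p' * (q - q') by ring.
rewrite h1 h2; ring.
Qed.

Lemma congX a N p p' n : cong a N p p' -> cong a N (p ^+ n) (p' ^+ n).
Proof.
move=> h; elim: n => [|n IH]; first by rewrite !expr0; apply: cong_refl.
by rewrite !exprS; apply: congM.
Qed.

Lemma cong_coef a N p q : cong a N p q -> ((2 : int) ^+ a %| p`_N - q`_N)%Z.
Proof.
case=> C [D h]; have := congr1 (fun r : {poly int} => r`_N) h => /=.
rewrite coefB coefD coefCM coefXnM ltnSn addr0 => ->.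
exact: dvdz_mulr.
Qed.

Lemma t2_1 N : exists D, t2 N = 1 + k2 1 * D.
Proof.
exists (\sum_(1 <= r < (2 * N).+2) ((-1) ^+ r)%:P * 'X^(2 * r ^ 2)).
rewrite /t2 /th2 mulr_sumr; congr (_ + _); apply: eq_bigr => r _.
by rewrite /k2 expr1 polyCM mulrA.
Qed.

Lemma t2_pow N L : exists C, t2 N ^+ (2 ^ L) = 1 + k2 L.+1 * C.
Proof.
elim: L => [|L [C IH]]; first by rewrite expn0 expr1; apply: t2_1.
exists (C + k2 L * C ^+ 2).
rewrite expnS mulnC exprM IH.
have -> : k2 L.+2 = k2 1 * k2 L.+1 by rewrite -k2D.
have -> : k2 L.+1 = k2 1 * k2 L by rewrite -k2D.
rewrite k2_1; ring.
Qed.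

Lemma W_cong N L : cong L.+1 N (W N) (t2 N ^+ (2 ^ L).-1).
Proof.
have [C hC] := t2_pow N L.
apply: (cong_trans _ _ _ (W N * t2 N ^+ (2 ^ L))).
  apply: cong_sym; exists (W N * C), 0; rewrite hC; ring.
apply: eqt_cong.
have -> : W N * t2 N ^+ (2 ^ L) = (W N * t2 N) * t2 N ^+ (2 ^ L).-1.
  by rewrite -mulrA -exprS prednK // expn_gt0.
apply: eqt_trans (_ : eqt N (1 * t2 N ^+ (2 ^ L).-1) _); last by rewrite mul1r; apply: eqt_refl.
apply: eqtMr; apply: eqt_trans (W_Wi N); apply: eqtMl; apply: t2_eq.
Qed.

Lemma PoszX2 m : ((2 ^ m)%N%:Z) = (2 : int) ^+ m.
Proof. by elim: m => // m IH; rewrite expnS exprS PoszM IH. Qed.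

Lemma dvd_from_cong a N p q : cong a N p q -> ((2 : int) ^+ a %| q`_N)%Z ->
  ((2 : int) ^+ a %| p`_N)%Z.
Proof.
move=> h hq; have := cong_coef _ _ _ _ h => hd.
have -> : p`_N = (p`_N - q`_N) + q`_N by ring.
exact: rpredD.
Qed.

Lemma main_gen (k N w : nat) (c : int) : (1 <= k)%N -> (N %% 8)%N = 7%N ->
  (c + 1 = (2 ^ k.-1 * w)%N%:Z \/ c + 1 = (2 ^ k.-1 * w)%N%:Z - 2) ->
  ((2 : int) ^+ (k + 3) %| abar c N)%Z.
Proof.
move=> hk hN hc.
set j := k.-1; set L := (k + 2)%N; set M := (2 ^ j * w)%N.
have hkj : (k + 3 = j.+4)%N by rewrite /j; lia.
have hL : (k + 3 = L.+1)%N by rewrite /L; lia.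
set E := eta_trunc 4 (c - 1) N * eta_trunc 1 (-2) N * eta_trunc 2 (- (2 * c - 3)) N.
have hE : abar c N = E`_N by [].
rewrite hE.
have hT := T_form N c; rewrite -/E in hT.
have hW : cong (k + 3) N (W N ^+ M) (t2 N ^+ ((2 ^ L).-1 * M)).
  by rewrite hL exprM; apply: congX; apply: W_cong.
have eM : ((2 ^ L).-1 * M = 2 ^ j * ((2 ^ L).-1 * w))%N by rewrite /M mulnCA.
have [g1 g2] := good_final N j ((2 ^ L).-1 * w).
case: hc => hc.
- rewrite hc /= in hT.
  apply: (dvd_from_cong _ _ _ (thp N * t2 N ^+ ((2 ^ L).-1 * M))).
    apply: cong_trans (eqt_cong _ _ _ _ hT) _.
    by apply: congM; [apply: cong_refl | exact: hW].
  by rewrite hkj eM; apply: final_dvd g1 hN.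
- have hp : eqt N (pw (W N) (Wi N) (c + 1)) (W N ^+ M * t2 N ^+ 2).
    rewrite hc; apply: eqt_trans (pwD _ _ _ M%:Z (-2) (W_Wi N)) _.
    by apply: eqtMl; apply: eqtX; apply: eqt_sym; apply: t2_eq.
  apply: (dvd_from_cong _ _ _ (thp N * (t2 N ^+ 2 * t2 N ^+ ((2 ^ L).-1 * M)))).
    apply: cong_trans (eqt_cong _ _ _ _ (eqt_trans _ _ _ _ hT (eqtMl _ _ _ _ hp))) _.
    apply: congM; first exact: cong_refl.
    rewrite mulrC; apply: congM => //; exact: cong_refl.
  by rewrite hkj eM; apply: final_dvd g2 hN.
Qed.

Theorem theorem1p8 (n k i : nat) (hk : (1 <= k)%N) :
  ((2 ^+ (k + 3) : int) %| abar ((2 ^+ k : int) * i%:Z + ((2 ^+ k - 6) %/ 2)%Z) (8 * n + 7))%Z /\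
  ((2 ^+ (k + 3) : int) %| abar ((2 ^+ k : int) * i%:Z + ((2 ^+ k - 2) %/ 2)%Z) (8 * n + 7))%Z.
Proof.
have hN : ((8 * n + 7) %% 8)%N = 7%N by rewrite mulnC modnMDl.
have ek : (2 : int) ^+ k = 2 * 2 ^+ k.-1 by rewrite -exprS prednK.
have hx : ((2 ^ k.-1 * (2 * i).+1)%N%:Z) = 2 ^+ k.-1 * (2 * i%:Z + 1).
  by rewrite PoszM PoszX2; congr (_ * _); lia.
split; apply: (main_gen k (8 * n + 7) (2 * i).+1) => //.
- right; rewrite hx ek.
  have -> : 2 * 2 ^+ k.-1 - 6 = (2 ^+ k.-1 - 3) * (2 : int) by ring.
  rewrite mulzK //; ring.
- left; rewrite hx ek.
  have -> : 2 * 2 ^+ k.-1 - 2 = (2 ^+ k.-1 - 1) * (2 : int) by ring.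
  rewrite mulzK //; ring.
Qed.
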